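(* Let $r,s\in\widetilde{\mathbb{K}}_{sm}$ with $r\neq0$, $s\neq0$ and $rs=0$. Then there exists a characteristic set $S\subseteq I$ such that $r|_S=0$ and $s|_S=0$.
   Context: Let $I=(0,1]$ and $\mathbb{K}\in\{\mathbb{R},\mathbb{C}\}$. $\widetilde{\mathbb{K}}_{sm}=\mathcal{E}_{M,sm}/\mathcal{N}_{sm}$ where $\mathcal{E}_{M,sm}$ is the set of nets $(r_\varepsilon)_{\varepsilon\in I}\in\mathbb{K}^I$ smooth in $\varepsilon$ with $|r_\varepsilon|=O(\varepsilon^{-N})$ as $\varepsilon\to0$ for some $N$, and $\mathcal{N}_{sm}$ those with $|r_\varepsilon|=O(\varepsilon^m)$ for all $m$. A subset $S\subseteq I$ is a characteristic set if $0\in\overline{S}$. For $r\in\widetilde{\mathbb{K}}_{sm}$ and a characteristic set $S$, $r|_S=0$ means: for a (equivalently, any) representative $(r_\varepsilon)_\varepsilon$ and every $m\in\mathbb{N}$ there is $\varepsilon_0>0$ with $|r_\varepsilon|<\varepsilon^m$ for all $\varepsilon\in S$ with $\varepsilon<\varepsilon_0$. *)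

(* Defs.v *)
From Stdlib Require Import Reals Lra.
From Coquelicot Require Import Coquelicot.
Open Scope R_scope.

Definition inI (e : R) : Prop := 0 < e <= 1.

Definition smooth_on_I (f : R -> R) : Prop :=
  exists (g : R -> R) (d : R), 0 < d /\
    (forall e, inI e -> g e = f e) /\
    (forall (n : nat) (x : R), 0 < x < 1 + d -> ex_derive_n g n x).

(* Growth conditions, stated on the absolute value a e = |r_e| of a net. *)
Definition moderate_abs (a : R -> R) : Prop :=
  exists (N : nat) (C e0 : R), 0 < e0 /\
    forall e, inI e -> e < e0 -> a e <= C / e ^ N.

Definition negligible_abs (a : R -> R) : Prop :=
  forall m : nat, exists (C e0 : R), 0 < e0 /\
    forall e, inI e -> e < e0 -> a e <= C * e ^ m.

Definition EMsmR (r : R -> R) : Prop :=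
  smooth_on_I r /\ moderate_abs (fun e => Rabs (r e)).
Definition NsmR (r : R -> R) : Prop := negligible_abs (fun e => Rabs (r e)).

Definition EMsmC (r : R -> C) : Prop :=
  smooth_on_I (fun e => Re (r e)) /\ smooth_on_I (fun e => Im (r e)) /\
  moderate_abs (fun e => Cmod (r e)).
Definition NsmC (r : R -> C) : Prop := negligible_abs (fun e => Cmod (r e)).

Definition char_set (S : R -> Prop) : Prop :=
  (forall e, S e -> inI e) /\
  (forall d, 0 < d -> exists e, S e /\ e < d).

(* r|_S = 0, stated on |r_e| for a representative *)
Definition restr_zero_abs (a : R -> R) (S : R -> Prop) : Prop :=
  forall m : nat, exists e0, 0 < e0 /\
    forall e, S e -> e < e0 -> a e < e ^ m.

(* Main.v *)
Require Import Defs.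
From Stdlib Require Import Reals.
From Coquelicot Require Import Coquelicot.
From Stdlib Require Import Lra Psatz Classical.
Open Scope R_scope.

Lemma not_negl (A : R -> R) : ~ negligible_abs A ->
  exists m : nat, forall C e0, 0 < e0 -> exists e, inI e /\ e < e0 /\ C * e ^ m < A e.
Proof.
  intros H. apply NNPP; intros H1; apply H; intros m.
  apply NNPP; intros H2; apply H1; exists m; intros C e0 He0.
  apply NNPP; intros H3; apply H2; exists C, e0; split; auto.
  intros e He He0'. apply Rnot_lt_le; intros H4; apply H3; exists e; auto.
Qed.

Lemma find_pt (A B : R -> R) (mA : nat) :
  (forall x, 0 <= B x) ->
  (forall C e0, 0 < e0 -> exists e, inI e /\ e < e0 /\ C * e ^ mA < A e) ->
  negligible_abs (fun e => A e * B e) ->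
  forall d, 0 < d -> exists a, inI a /\ a < d /\ B a < A a.
Proof.
  intros HB HA HN d Hd.
  destruct (HN (2 * mA)%nat) as [C1 [e1 [He1 H1]]].
  destruct (HA (Rabs C1 + 1) (Rmin d e1)) as [a [Ia [Ha Hla]]].
  { apply Rmin_pos; auto. }
  exists a; split; [auto|split].
  { pose proof (Rmin_l d e1); lra. }
  assert (Ha1 : a < e1) by (pose proof (Rmin_r d e1); lra).
  specialize (H1 a Ia Ha1).
  replace (2 * mA)%nat with (mA + mA)%nat in H1 by lia.
  rewrite pow_add in H1.
  assert (P0 : 0 <= a ^ mA) by (apply pow_le; destruct Ia; lra).
  pose proof (Rabs_pos C1). pose proof (Rle_abs C1). pose proof (HB a).
  set (P := a ^ mA) in *.
  assert (C1 * (P * P) <= (Rabs C1 + 1) * (Rabs C1 + 1) * (P*P)).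
  { apply Rmult_le_compat_r; nra. }
  apply Rnot_le_lt; intros Hc.
  assert (0 <= (Rabs C1 + 1) * P) by nra.
  assert ((Rabs C1 + 1) * P * ((Rabs C1 + 1) * P) < A a * A a) by nra.
  nra.
Qed.

Lemma core (A B : R -> R) :
  (forall x, inI x -> continuity_pt A x) ->
  (forall x, inI x -> continuity_pt B x) ->
  (forall x, 0 <= A x) -> (forall x, 0 <= B x) ->
  ~ negligible_abs A -> ~ negligible_abs B ->
  negligible_abs (fun e => A e * B e) ->
  exists S : R -> Prop, char_set S /\ restr_zero_abs A S /\ restr_zero_abs B S.
Proof.
  intros cA cB pA pB nA nB N.
  exists (fun c => inI c /\ A c = B c).
  split; [split|split].
  - intros e [? ?]; auto.
  - intros d Hd.
    destruct (not_negl A nA) as [mA HA].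
    destruct (not_negl B nB) as [mB HB'].
    destruct (find_pt A B mA pB HA N d Hd) as [a [Ia [ad Ha]]].
    assert (N' : negligible_abs (fun e => B e * A e)).
    { intros m; destruct (N m) as [C [e0 [? H]]]; exists C, e0; split; auto.
      intros e ? ?; rewrite Rmult_comm; auto. }
    destruct (find_pt B A mB pA HB' N' d Hd) as [b [Ib [bd Hb]]].
    assert (cont : forall lo hi, inI lo -> inI hi ->
              forall x, lo <= x <= hi -> continuity_pt (fun x => A x - B x) x
                /\ continuity_pt (fun x => B x - A x) x).
    { intros lo hi [? ?] [? ?] x Hx. assert (inI x) by (split; lra).
      split; apply continuity_pt_minus; auto. }
    destruct (Rlt_or_le a b) as [ab|ba].
    + destruct (Ranalysis5.IVT_interv (fun x => B x - A x) a b) as [c [Hc Hc0]];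
        [ intros x Hx; apply (cont a b Ia Ib x Hx) | auto | lra | lra | ].
      exists c. destruct Ia, Ib. repeat split; try lra.
    + assert (ba' : b < a) by (destruct (Req_dec a b); subst; lra).
      destruct (Ranalysis5.IVT_interv (fun x => A x - B x) b a) as [c [Hc Hc0]];
        [ intros x Hx; apply (cont b a Ib Ia x Hx) | auto | lra | lra | ].
      exists c. destruct Ia, Ib. repeat split; try lra.
  - intros m. destruct (N (2 * m + 2)%nat) as [C [e1 [He1 H1]]].
    exists (Rmin e1 (/ (Rabs C + 1))). split.
    { apply Rmin_pos; auto. apply Rinv_0_lt_compat. pose proof (Rabs_pos C); lra. }
    intros c [Ic Eq] Hc.
    assert (c < e1) by (pose proof (Rmin_l e1 (/ (Rabs C + 1))); lra).
    assert (Hc2 : c < / (Rabs C + 1)) by (pose proof (Rmin_r e1 (/ (Rabs C + 1))); lra).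
    specialize (H1 c Ic H). rewrite <- Eq in H1.
    replace (2 * m + 2)%nat with ((m + m) + 2)%nat in H1 by lia.
    rewrite !pow_add in H1. destruct Ic as [c0 c1].
    assert (P0 : 0 < c ^ m) by (apply pow_lt; lra).
    set (P := c ^ m) in *. simpl in H1.
    pose proof (Rabs_pos C). pose proof (Rle_abs C). pose proof (pA c).
    assert (Hk : (Rabs C + 1) * c < 1).
    { apply Rmult_lt_reg_r with (/ (Rabs C + 1)). apply Rinv_0_lt_compat; lra.
      rewrite Rmult_comm, <- Rmult_assoc, Rinv_l by lra. lra. }
    assert (Hcc : c * c <= c) by nra.
    assert (Hk2 : C * (c * (c * 1)) < 1).
    { replace (c * (c * 1)) with (c * c) by ring.
      assert (C * (c * c) <= Rabs C * (c * c)) by (apply Rmult_le_compat_r; nra).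
      assert (Rabs C * (c * c) <= Rabs C * c) by (apply Rmult_le_compat_l; lra).
      nra. }
    assert (HPP : 0 < P * P) by nra.
    assert (A c * A c < P * P).
    { replace (C * (P * P * (c * (c * 1)))) with ((P * P) * (C * (c * (c * 1)))) in H1 by ring.
      assert (P * P * (C * (c * (c * 1))) < P * P * 1) by (apply Rmult_lt_compat_l; auto).
      lra. }
    apply Rnot_le_lt; intros Hn.
    assert (P * P <= A c * A c) by (apply Rmult_le_compat; lra).
    lra.
  - intros m. destruct (N (2 * m + 2)%nat) as [C [e1 [He1 H1]]].
    exists (Rmin e1 (/ (Rabs C + 1))). split.
    { apply Rmin_pos; auto. apply Rinv_0_lt_compat. pose proof (Rabs_pos C); lra. }
    intros c [Ic Eq] Hc.
    assert (c < e1) by (pose proof (Rmin_l e1 (/ (Rabs C + 1))); lra).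
    assert (Hc2 : c < / (Rabs C + 1)) by (pose proof (Rmin_r e1 (/ (Rabs C + 1))); lra).
    specialize (H1 c Ic H). rewrite Eq in H1.
    replace (2 * m + 2)%nat with ((m + m) + 2)%nat in H1 by lia.
    rewrite !pow_add in H1. destruct Ic as [c0 c1].
    assert (P0 : 0 < c ^ m) by (apply pow_lt; lra).
    set (P := c ^ m) in *. simpl in H1.
    pose proof (Rabs_pos C). pose proof (Rle_abs C). pose proof (pB c).
    assert (Hk : (Rabs C + 1) * c < 1).
    { apply Rmult_lt_reg_r with (/ (Rabs C + 1)). apply Rinv_0_lt_compat; lra.
      rewrite Rmult_comm, <- Rmult_assoc, Rinv_l by lra. lra. }
    assert (Hcc : c * c <= c) by nra.
    assert (Hk2 : C * (c * (c * 1)) < 1).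
    { replace (c * (c * 1)) with (c * c) by ring.
      assert (C * (c * c) <= Rabs C * (c * c)) by (apply Rmult_le_compat_r; nra).
      assert (Rabs C * (c * c) <= Rabs C * c) by (apply Rmult_le_compat_l; lra).
      nra. }
    assert (HPP : 0 < P * P) by nra.
    assert (B c * B c < P * P).
    { replace (C * (P * P * (c * (c * 1)))) with ((P * P) * (C * (c * (c * 1)))) in H1 by ring.
      assert (P * P * (C * (c * (c * 1))) < P * P * 1) by (apply Rmult_lt_compat_l; auto).
      lra. }
    apply Rnot_le_lt; intros Hn.
    assert (P * P <= B c * B c) by (apply Rmult_le_compat; lra).
    lra.
Qed.

Lemma negl_ext (A A' : R -> R) : (forall e, inI e -> A e = A' e) ->
  negligible_abs A -> negligible_abs A'.
Proof.
  intros E N m; destruct (N m) as [C [e0 [? H]]]; exists C, e0; split; auto.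
  intros e Ie He; rewrite <- E; auto.
Qed.

Lemma restr_ext (A A' : R -> R) S : (forall e, inI e -> A e = A' e) ->
  char_set S -> restr_zero_abs A S -> restr_zero_abs A' S.
Proof.
  intros E [HS _] N m; destruct (N m) as [e0 [? H]]; exists e0; split; auto.
  intros e Se He; rewrite <- E; auto.
Qed.

Lemma smooth_cont (f : R -> R) : smooth_on_I f ->
  exists g, (forall e, inI e -> g e = f e) /\ forall x, inI x -> continuity_pt g x.
Proof.
  intros [g [d [Hd [E D]]]]. exists g; split; auto.
  intros x [? ?]. apply continuity_pt_filterlim.
  apply (ex_derive_continuous g x). apply (D 1%nat x). lra.
Qed.

Lemma gen (A B A' B' : R -> R) :
  (forall x, inI x -> continuity_pt A' x) ->
  (forall x, inI x -> continuity_pt B' x) ->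
  (forall x, 0 <= A' x) -> (forall x, 0 <= B' x) ->
  (forall e, inI e -> A e = A' e) -> (forall e, inI e -> B e = B' e) ->
  ~ negligible_abs A -> ~ negligible_abs B ->
  negligible_abs (fun e => A e * B e) ->
  exists S : R -> Prop, char_set S /\ restr_zero_abs A S /\ restr_zero_abs B S.
Proof.
  intros cA cB pA pB EA EB nA nB N.
  destruct (core A' B' cA cB pA pB) as [S [HS [R1 R2]]].
  - intros H; apply nA; apply (negl_ext A'); auto. intros; symmetry; auto.
  - intros H; apply nB; apply (negl_ext B'); auto. intros; symmetry; auto.
  - apply (negl_ext (fun e => A e * B e)); auto. intros e Ie; rewrite EA, EB; auto.
  - exists S; split; [auto|split].
    + apply (restr_ext A'); auto. intros; symmetry; auto.
    + apply (restr_ext B'); auto. intros; symmetry; auto.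
Qed.

Lemma cont_abs g x : continuity_pt g x -> continuity_pt (fun e => Rabs (g e)) x.
Proof.
  intros H. change (fun e => Rabs (g e)) with (comp Rabs g).
  apply continuity_pt_comp; auto. apply Rcontinuity_abs.
Qed.

Lemma cont_mod g1 g2 x : continuity_pt g1 x -> continuity_pt g2 x ->
  continuity_pt (fun e => sqrt (g1 e ^ 2 + g2 e ^ 2)) x.
Proof.
  intros H1 H2. change (fun e => sqrt (g1 e ^ 2 + g2 e ^ 2))
    with (comp sqrt (fun e => g1 e ^ 2 + g2 e ^ 2)).
  apply continuity_pt_comp.
  - apply continuity_pt_plus; simpl; apply continuity_pt_mult; auto;
      apply continuity_pt_mult; auto; apply continuity_pt_const; intros ? ?; auto.
  - apply continuity_pt_sqrt. nra.
Qed.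

Theorem lemma4p17 :
  (forall r s : R -> R,
      EMsmR r -> EMsmR s ->
      ~ NsmR r -> ~ NsmR s ->
      NsmR (fun e => r e * s e) ->
      exists S : R -> Prop, char_set S /\
        restr_zero_abs (fun e => Rabs (r e)) S /\
        restr_zero_abs (fun e => Rabs (s e)) S)
  /\
  (forall r s : R -> C,
      EMsmC r -> EMsmC s ->
      ~ NsmC r -> ~ NsmC s ->
      NsmC (fun e => Cmult (r e) (s e)) ->
      exists S : R -> Prop, char_set S /\
        restr_zero_abs (fun e => Cmod (r e)) S /\
        restr_zero_abs (fun e => Cmod (s e)) S).
Proof.
  split.
  - intros r s [sr _] [ss _] nr ns N.
    destruct (smooth_cont r sr) as [gr [Er Cr]].
    destruct (smooth_cont s ss) as [gs [Es Cs]].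
    apply (gen _ _ (fun e => Rabs (gr e)) (fun e => Rabs (gs e))); auto.
    + intros; apply cont_abs; auto.
    + intros; apply cont_abs; auto.
    + intros; apply Rabs_pos.
    + intros; apply Rabs_pos.
    + intros e Ie; rewrite Er; auto.
    + intros e Ie; rewrite Es; auto.
    + apply (negl_ext (fun e => Rabs (r e * s e))); auto.
      intros; apply Rabs_mult.
  - intros r s [sr1 [sr2 _]] [ss1 [ss2 _]] nr ns N.
    destruct (smooth_cont _ sr1) as [g1 [E1 C1]].
    destruct (smooth_cont _ sr2) as [g2 [E2 C2]].
    destruct (smooth_cont _ ss1) as [h1 [F1 D1]].
    destruct (smooth_cont _ ss2) as [h2 [F2 D2]].
    apply (gen _ _ (fun e => sqrt (g1 e ^ 2 + g2 e ^ 2))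
                   (fun e => sqrt (h1 e ^ 2 + h2 e ^ 2))); auto.
    + intros; apply cont_mod; auto.
    + intros; apply cont_mod; auto.
    + intros; apply sqrt_pos.
    + intros; apply sqrt_pos.
    + intros e Ie; unfold Cmod; rewrite E1, E2; auto.
    + intros e Ie; unfold Cmod; rewrite F1, F2; auto.
    + apply (negl_ext (fun e => Cmod (r e * s e))); auto.
      intros; apply Cmod_mult.
Qed.
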